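(* Let $\phi$ be a uniformly convex N-function with indices $p^-$ and $p^+$, let $\Omega\subset\mathbb{R}^n$ be open, and let $0<\delta^-\le1\le\delta^+<\infty$, $\delta=(\delta^-,\delta^+)$. Then $$L^{p^-}(\Omega)\cap L^{p^+}(\Omega)\cap L^2(\Omega)\hookrightarrow L^{\phi_\delta}(\Omega)\hookrightarrow L^{p^-}(\Omega)+L^{p^+}(\Omega)+L^2(\Omega),$$ with embedding constants bounded uniformly with respect to $\delta$.
   Context: An N-function is a function $\phi:[0,\infty)\to[0,\infty)$ with right-continuous non-decreasing derivative $\phi'$, $\phi'(0)=0$, $\phi'(t)>0$ for $t>0$, $\phi'(t)\to\infty$, $\phi(t)=\int_0^t\phi'$. It is uniformly convex if $\phi\in C^1([0,\infty))\cap C^2((0,\infty))$ and $p^-:=\inf_{t>0}\frac{\phi''(t)t}{\phi'(t)}+1>1$, $p^+:=\sup_{t>0}\frac{\phi''(t)t}{\phi'(t)}+1<\infty$. The truncated N-function $\phi_\delta$ is defined by $\phi_\delta'(t):=\frac{\phi'(\max(\delta^-,\min(t,\delta^+)))}{\max(\delta^-,\min(t,\delta^+))}\,t$, $\phi_\delta(t)=\int_0^t\phi_\delta'$. $L^{\phi_\delta}(\Omega)$ is the Orlicz space with Luxemburg norm $\|v\|=\inf\{\lambda>0:\int_\Omega\phi_\delta(|v|/\lambda)\le1\}$. Intersections of Lebesgue spaces carry the maximum of the norms, sums carry the infimum over decompositions of the sum of the norms. *)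

(* Defs.v *)
From HB Require Import structures.
From mathcomp Require Import all_boot all_order all_algebra.
From mathcomp Require Import all_classical all_reals all_analysis.
Set Implicit Arguments. Unset Strict Implicit. Unset Printing Implicit Defensive.
Import Order.TTheory GRing.Theory Num.Def Num.Theory.
Import numFieldNormedType.Exports.
Local Open Scope classical_set_scope.
Local Open Scope ring_scope.

Section Defs.
Context {R : realType}.

(* Only values on [0,oo) matter. *)
Definition Nfunction (phi dphi : R -> R) : Prop :=
  [/\ (forall t, 0 <= t -> dphi x @[x --> t^'+] --> dphi t),
      (forall s t, 0 <= s -> s <= t -> dphi s <= dphi t),
      dphi 0 = 0,
      (forall t, 0 < t -> 0 < dphi t) /\
        (dphi x @[x --> +oo] --> +oo) &
      (forall t, 0 <= t ->
         (phi t)%:E = (\int[lebesgue_measure]_(s in `[0%R, t]) (dphi s)%:E)%E)].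

Definition index_ratio (dphi : R -> R) (t : R) : R :=
  (derive1 dphi t) * t / dphi t.

Definition p_minus (dphi : R -> R) : R :=
  inf [set index_ratio dphi t | t in `]0, +oo[] + 1.
Definition p_plus (dphi : R -> R) : R :=
  sup [set index_ratio dphi t | t in `]0, +oo[] + 1.

(* Uniform convexity of the N-function phi = int_0^. dphi:
   phi in C^1([0,oo)) (i.e. dphi continuous on [0,oo)),
   phi in C^2((0,oo)) (i.e. dphi continuously differentiable on (0,oo)),
   p^- > 1 and p^+ < oo (the ratio set is bounded above). *)
Definition uniformly_convex (dphi : R -> R) : Prop :=
  [/\ {within `[0, +oo[, continuous dphi},
      (forall t, 0 < t -> derivable dphi t 1),
      {in `]0, +oo[, continuous (derive1 dphi)},
      1 < p_minus dphi &
      has_ubound [set index_ratio dphi t | t in `]0, +oo[] ].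

Definition clampd (dm dp t : R) : R := Num.max dm (Num.min t dp).

Definition dphi_delta (dphi : R -> R) (dm dp : R) (t : R) : R :=
  dphi (clampd dm dp t) / clampd dm dp t * t.

Definition phi_delta (dphi : R -> R) (dm dp : R) (t : R) : \bar R :=
  (\int[lebesgue_measure]_(s in `[0%R, t]) (dphi_delta dphi dm dp s)%:E)%E.

Definition luxemburg {d} {T : measurableType d} (mu : {measure set T -> \bar R})
    (Omega : set T) (Phi : R -> \bar R) (v : T -> R) : \bar R :=
  ereal_inf [set lam%:E | lam in
    [set lam : R | 0 < lam /\
       (\int[mu]_(x in Omega) Phi (`|v x| / lam)%R <= 1)%E]].

Definition LpO {d} {T : measurableType d} (mu : {measure set T -> \bar R})
    (Omega : set T) (mO : measurable Omega) (p : R) (v : T -> R) : \bar R :=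
  Lnorm (mrestr mu mO) p%:E (EFin \o v).

Definition cap3_norm {d} {T : measurableType d} (mu : {measure set T -> \bar R})
    (Omega : set T) (mO : measurable Omega) (p1 p2 p3 : R) (v : T -> R) : \bar R :=
  Order.max (LpO mu mO p1 v) (Order.max (LpO mu mO p2 v) (LpO mu mO p3 v)).

Definition sum3_norm {d} {T : measurableType d} (mu : {measure set T -> \bar R})
    (Omega : set T) (mO : measurable Omega) (p1 p2 p3 : R) (v : T -> R) : \bar R :=
  ereal_inf [set e : \bar R | exists v1 v2 v3 : T -> R,
    [/\ measurable_fun Omega v1, measurable_fun Omega v2,
        measurable_fun Omega v3,
        (forall x, Omega x -> v x = v1 x + v2 x + v3 x) &
        e = (LpO mu mO p1 v1 + LpO mu mO p2 v2 + LpO mu mO p3 v3)%E]].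
End Defs.

(* Main.v *)
From HB Require Import structures.
From mathcomp Require Import all_boot all_order all_algebra.
From mathcomp Require Import all_classical all_reals all_analysis.
From mathcomp Require Import ring lra.
From mathcomp Require Import measurable_realfun lebesgue_measure.
Require Import Defs.
Import Order.TTheory GRing.Theory Num.Def Num.Theory.
Import numFieldNormedType.Exports.
Local Open Scope classical_set_scope.
Local Open Scope ring_scope.
Section Integ.
Local Open Scope ereal_scope.
Context d (T : measurableType d) (R : realType).

Lemma GL (m : {measure set T -> \bar R}) (D1 D2 : set T) (f1 f2 : T -> \bar R) :
  (forall x, 0 <= (f1 \_ D1) x) -> (forall x, (f1 \_ D1) x <= (f2 \_ D2) x) ->
  \int[m]_(x in D1) f1 x <= \int[m]_(x in D2) f2 x.
Proof.
move=> f10 f12.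
have f20 : forall x, D2 x -> 0 <= f2 x.
  move=> x D2x; apply: le_trans (f10 x) _; apply: le_trans (f12 x) _.
  by rewrite patchE mem_set.
rewrite ge0_integralE; last first.
  by move=> x D1x; have := f10 x; rewrite patchE mem_set.
rewrite ge0_integralE //.
apply: le_ereal_sup => _ [h /= hf1 <-]; exists h => //= x.
exact: le_trans (hf1 x) (f12 x).
Qed.

Lemma int_mrestr (mu : {measure set T -> \bar R}) (O : set T) (mO : measurable O)
  (f : T -> \bar R) : measurable_fun [set: T] f -> (forall x, 0 <= f x) ->
  \int[mrestr mu mO]_x f x = \int[mu]_(x in O) f x.
Proof.
move=> mf f0.
rewrite -(setUv O) ge0_integral_setU //; last 3 first.
  - exact: measurableC.
  - by rewrite setUv.
  - by apply/disj_set2P; rewrite setICr.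
rewrite (@null_set_integral _ _ _ (mrestr mu mO) (~` O)); last 3 first.
  - exact: measurableC.
  - exact: measurable_funS mf.
  - by rewrite /= /mrestr setICl measure0.
rewrite adde0.
apply: eq_measure_integral => A mA AO.
by rewrite /= /mrestr setIidl.
Qed.
End Integ.

Section RA.
Context {R : realType}.
Variable dphi : R -> R.
Hypothesis Hpos : forall t, 0 < t -> 0 < dphi t.
Hypothesis Hder : forall t, 0 < t -> derivable dphi t 1.

Lemma k_deriv (a x : R) : 0 < x ->
  is_derive x 1 (fun y => dphi y * y `^ (- a))
    (x `^ (- a - 1) * ('D_1 dphi x * x - a * dphi x)).
Proof.
move=> x0.
have D1 := derivableP (Hder x x0).
have D2 := is_derive1_powR (- a) x0.
have D := is_deriveM D1 D2.
eapply is_derive_eq; [exact D|].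
rewrite /= /GRing.scale /=.
idtac.
have -> : x `^ (- a) = x `^ (- a - 1) * x.
  rewrite -[X in _ * X](powRr1 (ltW x0)) -powRD ?subrK //.
  by apply/implyP => _; rewrite gt_eqF.
ring.
Qed.

Lemma k_ndecr (a : R) : (forall t, 0 < t -> a <= index_ratio dphi t) ->
  forall s t, 0 < s -> s <= t -> dphi s * s `^ (- a) <= dphi t * t `^ (- a).
Proof.
move=> Ha s t s0 st.
have t0 : 0 < t by apply: lt_le_trans st.
have in_pos : forall x, x \in `[s, t] -> 0 < x.
  by move=> x; rewrite in_itv /= => /andP[sx _]; apply: lt_le_trans sx.
apply: (@ger0_derive1_le_cc _ (fun y => dphi y * y `^ (- a)) s t).
- move=> x; rewrite in_itv /= => /andP[sx _].
  have x0 : 0 < x by apply: lt_trans sx.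
  by case: (k_deriv a x x0).
- move=> x; rewrite in_itv /= => /andP[sx _].
  have x0 : 0 < x by apply: lt_trans sx.
  rewrite derive1E (@derive_val _ _ _ _ _ _ _ (k_deriv a x x0)).
  apply: mulr_ge0; first exact: powR_ge0.
  have := Ha x x0; rewrite /index_ratio derive1E.
  rewrite ler_pdivlMr ?Hpos // subr_ge0 mulrC.
  done.
- apply: continuous_in_subspaceT => x xin.
  have x0 : 0 < x by move: xin; rewrite inE /= in_itv /= => /andP[sx _]; apply: lt_le_trans sx.
  apply: differentiable_continuous.
  apply/derivable1_diffP; by case: (k_deriv a x x0).
- by rewrite in_itv /= lexx st.
- by rewrite in_itv /= lexx st.
- done.
Qed.

Lemma k_nincr (a : R) : (forall t, 0 < t -> index_ratio dphi t <= a) ->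
  forall s t, 0 < s -> s <= t -> dphi t * t `^ (- a) <= dphi s * s `^ (- a).
Proof.
move=> Ha s t s0 st.
apply: (@ler0_derive1_le_cc _ (fun y => dphi y * y `^ (- a)) s t).
- move=> x; rewrite in_itv /= => /andP[sx _].
  have x0 : 0 < x by apply: lt_trans sx.
  by case: (k_deriv a x x0).
- move=> x; rewrite in_itv /= => /andP[sx _].
  have x0 : 0 < x by apply: lt_trans sx.
  rewrite derive1E (@derive_val _ _ _ _ _ _ _ (k_deriv a x x0)).
  apply: mulr_ge0_le0; first exact: powR_ge0.
  have := Ha x x0; rewrite /index_ratio derive1E.
  by rewrite ler_pdivrMr ?Hpos // subr_le0 mulrC.
- apply: continuous_in_subspaceT => x xin.
  have x0 : 0 < x by move: xin; rewrite inE /= in_itv /= => /andP[sx _]; apply: lt_le_trans sx.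
  apply: differentiable_continuous.
  by apply/derivable1_diffP; case: (k_deriv a x x0).
- by rewrite in_itv /= lexx st.
- by rewrite in_itv /= lexx st.
- done.
Qed.

Lemma pw_base_pos (a x y : R) : 0 <= a -> 0 <= x -> x <= y -> x `^ a <= y `^ a.
Proof.
move=> a0 x0 xy; apply: ge0_ler_powR => //; rewrite nnegrE //.
exact: le_trans xy.
Qed.

Lemma pw_base_neg (a x y : R) : a <= 0 -> 0 < x -> x <= y -> y `^ a <= x `^ a.
Proof.
move=> a0 x0 xy.
have y0 : 0 < y by apply: lt_le_trans xy.
have -> : y `^ a = (y `^ (- a))^-1 by rewrite -powRN opprK.
have -> : x `^ a = (x `^ (- a))^-1 by rewrite -powRN opprK.
rewrite lef_pV2 ?posrE ?powR_gt0 //.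
by apply: pw_base_pos => //; rewrite ?oppr_ge0 // ltW.
Qed.

Lemma pw_exp_ge1 (x a b : R) : 1 <= x -> a <= b -> x `^ a <= x `^ b.
Proof. by move=> x1 ab; apply: ler_powR. Qed.

Lemma pw_exp_le1 (x a b : R) : 0 < x -> x <= 1 -> a <= b -> x `^ b <= x `^ a.
Proof. by move=> x0 x1 ab; apply: ger_powR => //; rewrite x0 x1. Qed.

Lemma pw_mulN (x a : R) : 0 < x -> x `^ (- a) * x `^ a = 1.
Proof.
by move=> x0; rewrite powRN mulVf // gt_eqF // powR_gt0.
Qed.

Lemma pw_div (c a : R) : 0 < c -> c `^ a / c = c `^ (a - 1).
Proof.
move=> c0; rewrite powRB ?powRr1 ?(ltW c0) //.
by apply/implyP => _; rewrite gt_eqF.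
Qed.

Lemma pw_mul (s e : R) : 0 <= s -> 0 < e -> s `^ (e - 1) * s = s `^ e.
Proof. by move=> s0 e0; rewrite mulrC mulr_powRB1. Qed.

Lemma pw_mul1 (s a : R) : 0 <= s -> 0 < a + 1 -> s `^ a * s = s `^ (a + 1).
Proof. by move=> s0 a0; rewrite -(@pw_mul s (a + 1)) // addrK. Qed.

Variables am ap : R.
Hypothesis Hlb : forall t, 0 < t -> am <= index_ratio dphi t.
Hypothesis Hub : forall t, 0 < t -> index_ratio dphi t <= ap.

Let K := dphi 1.

Lemma P_le1 s : 0 < s -> s <= 1 -> K * s `^ ap <= dphi s /\ dphi s <= K * s `^ am.
Proof.
move=> s0 s1; split.
- have := @k_nincr ap Hub s 1 s0 s1; rewrite powR1 mulr1 -/K => h.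
  have sp : 0 < s `^ ap by rewrite powR_gt0.
  rewrite -[dphi s]mulr1 -(@pw_mulN s ap s0) mulrA.
  by rewrite ler_pM2r.
- have := @k_ndecr am Hlb s 1 s0 s1; rewrite powR1 mulr1 -/K => h.
  have sp : 0 < s `^ am by rewrite powR_gt0.
  rewrite -[dphi s]mulr1 -(@pw_mulN s am s0) mulrA.
  by rewrite ler_pM2r.
Qed.

Lemma P_ge1 s : 1 <= s -> K * s `^ am <= dphi s /\ dphi s <= K * s `^ ap.
Proof.
move=> s1; have s0 : 0 < s by apply: lt_le_trans s1.
split.
- have := @k_ndecr am Hlb 1 s ltr01 s1; rewrite powR1 mulr1 -/K => h.
  have sp : 0 < s `^ am by rewrite powR_gt0.
  rewrite -[dphi s]mulr1 -(@pw_mulN s am s0) mulrA.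
  by rewrite ler_pM2r.
- have := @k_nincr ap Hub 1 s ltr01 s1; rewrite powR1 mulr1 -/K => h.
  have sp : 0 < s `^ ap by rewrite powR_gt0.
  rewrite -[dphi s]mulr1 -(@pw_mulN s ap s0) mulrA.
  by rewrite ler_pM2r.
Qed.


Hypothesis am0 : 0 < am.
Hypothesis amap : am <= ap.
Hypothesis K0 : 0 < K.

Variables D E : R.
Hypothesis D0 : 0 < D.
Hypothesis D1 : D <= 1.
Hypothesis E1 : 1 <= E.

Let DE : D <= E. Proof. exact: le_trans D1 E1. Qed.

Lemma cl_lo s : s <= D -> clampd D E s = D.
Proof.
move=> sD; rewrite /clampd min_l; first by rewrite max_l.
exact: le_trans sD DE.
Qed.

Lemma cl_mid s : D <= s -> s <= E -> clampd D E s = s.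
Proof. by move=> Ds sE; rewrite /clampd min_l // max_r. Qed.

Lemma cl_hi s : E <= s -> clampd D E s = E.
Proof. by move=> Es; rewrite /clampd min_r // max_r. Qed.

Let g := dphi_delta dphi D E.

Lemma g_mid s : D <= s -> s <= E -> g s = dphi s.
Proof.
move=> Ds sE; rewrite /g /dphi_delta cl_mid // divfK //.
by rewrite gt_eqF // (lt_le_trans D0).
Qed.

Lemma g0 : g 0 = 0.
Proof. by rewrite /g /dphi_delta mulr0. Qed.

Lemma g_upper s : 0 <= s -> g s <= K * (s `^ am + s `^ ap + s).
Proof.
move=> s0.
have sam : 0 <= s `^ am by exact: powR_ge0.
have sap : 0 <= s `^ ap by exact: powR_ge0.
have [->|sp] := eqVneq s 0.
  by rewrite g0 mulr_ge0 // ?(ltW K0) // !addr_ge0 // powR_ge0.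
have {sp} sp : 0 < s by rewrite lt_def sp s0.
have [sD|Ds] := leP s D.
  rewrite /g /dphi_delta cl_lo //.
  have [h _] := P_le1 D D0 D1.
  have [_ h2] := P_le1 D D0 D1.
  have step : dphi D / D * s <= K * D `^ (am - 1) * s.
    rewrite ler_pM2r // -pw_div // mulrA ler_pM2r ?invr_gt0 //.
  apply: le_trans step _.
  have [am1|am1] := leP 1 am.
  - have : D `^ (am - 1) <= 1.
      rewrite -[X in _ <= X](powRr0 D); apply: pw_exp_le1 => //; by rewrite subr_ge0.
    move=> hD; apply: (@le_trans _ _ (K * s)).
      by rewrite -mulrA ler_pM2l // ger_pMl.
    rewrite ler_pM2l //; lra.
  - have : D `^ (am - 1) <= s `^ (am - 1).
      apply: pw_base_neg => //; first by rewrite subr_le0 ltW.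
    move=> hD; apply: (@le_trans _ _ (K * s `^ am)).
      by rewrite -mulrA ler_pM2l // -(@pw_mul s am s0 am0) ler_pM2r.
    rewrite ler_pM2l //; lra.
have [sE|Es] := leP s E.
  rewrite (g_mid s (ltW Ds) sE).
  have [s1|s1] := leP s 1.
    have [_ h] := P_le1 s sp s1; apply: le_trans h _.
    rewrite ler_pM2l //; lra.
  have [_ h] := P_ge1 s (ltW s1); apply: le_trans h _.
  rewrite ler_pM2l //; lra.
rewrite /g /dphi_delta (cl_hi s (ltW Es)).
have E0 : 0 < E by apply: lt_le_trans E1.
have [_ h2] := P_ge1 E E1.
have step : dphi E / E * s <= K * E `^ (ap - 1) * s.
  by rewrite ler_pM2r // -pw_div // mulrA ler_pM2r ?invr_gt0.
apply: le_trans step _.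
have [ap1|ap1] := leP ap 1.
- have : E `^ (ap - 1) <= 1.
    rewrite -[X in _ <= X](powRr0 E); apply: pw_exp_ge1 => //; by rewrite subr_le0.
  move=> hE; apply: (@le_trans _ _ (K * s)).
    by rewrite -mulrA ler_pM2l // ger_pMl.
  rewrite ler_pM2l //; lra.
- have : E `^ (ap - 1) <= s `^ (ap - 1).
    apply: pw_base_pos => //; first by rewrite subr_ge0 ltW.
    exact: ltW. exact: ltW.
  move=> hE; apply: (@le_trans _ _ (K * s `^ ap)).
    have ap0 : 0 < ap by apply: lt_trans ap1.
    by rewrite -mulrA ler_pM2l // -(@pw_mul s ap s0 ap0) ler_pM2r.
  rewrite ler_pM2l //; lra.
Qed.


Definition e1 := Num.max ap 1.
Definition e2 := Num.min am 1.

Lemma e1_ge1 : 1 <= e1. Proof. by rewrite /e1 le_max lexx orbT. Qed.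
Lemma e2_gt0 : 0 < e2. Proof. by rewrite /e2 lt_min am0 ltr01. Qed.
Lemma e2_le1 : e2 <= 1. Proof. by rewrite /e2 ge_min lexx orbT. Qed.
Lemma ap_le_e1 : ap <= e1. Proof. by rewrite /e1 le_max lexx. Qed.
Lemma e2_le_am : e2 <= am. Proof. by rewrite /e2 ge_min lexx. Qed.

Lemma g_lower s : 0 <= s -> K * Num.min (s `^ e1) (s `^ e2) <= g s.
Proof.
move=> s0.
have e10 : 0 < e1 by apply: lt_le_trans e1_ge1.
have [->|sp] := eqVneq s 0.
  by rewrite g0 !powR0 ?gt_eqF ?e2_gt0 // minxx mulr0.
have {sp} sp : 0 < s by rewrite lt_def sp s0.
have minl : Num.min (s `^ e1) (s `^ e2) <= s `^ e1 by rewrite ge_min lexx.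
have minr : Num.min (s `^ e1) (s `^ e2) <= s `^ e2 by rewrite ge_min lexx orbT.
have [sD|Ds] := leP s D.
  rewrite /g /dphi_delta cl_lo //.
  have [h _] := P_le1 D D0 D1.
  have step : K * D `^ (ap - 1) * s <= dphi D / D * s.
    by rewrite ler_pM2r // -pw_div // mulrA ler_pM2r ?invr_gt0.
  apply: le_trans step; rewrite -mulrA ler_pM2l //.
  apply: le_trans minl _.
  rewrite -(@pw_mul s e1 s0 e10) ler_pM2r //.
  apply: (@le_trans _ _ (D `^ (e1 - 1))).
    apply: pw_base_pos => //.
    by rewrite subr_ge0 e1_ge1.
  apply: pw_exp_le1 => //.
  by rewrite lerD2r ap_le_e1.
have [sE|Es] := leP s E.
  rewrite (g_mid s (ltW Ds) sE).
  have [s1|s1] := leP s 1.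
    have [h _] := P_le1 s sp s1; apply: le_trans h.
    rewrite ler_pM2l //; apply: le_trans minl _.
    by apply: pw_exp_le1 => //; exact: ap_le_e1.
  have [h _] := P_ge1 s (ltW s1); apply: le_trans h.
  rewrite ler_pM2l //; apply: le_trans minr _.
  by apply: pw_exp_ge1; [exact: ltW | exact: e2_le_am].
rewrite /g /dphi_delta (cl_hi s (ltW Es)).
have E0 : 0 < E by apply: lt_le_trans E1.
have [h _] := P_ge1 E E1.
have step : K * E `^ (am - 1) * s <= dphi E / E * s.
  by rewrite ler_pM2r // -pw_div // mulrA ler_pM2r ?invr_gt0.
apply: le_trans step; rewrite -mulrA ler_pM2l //.
apply: le_trans minr _.
rewrite -(@pw_mul s e2 s0 e2_gt0) ler_pM2r //.
apply: (@le_trans _ _ (E `^ (e2 - 1))).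
  apply: pw_base_neg => //; last exact: ltW.
  by rewrite subr_le0 e2_le1.
apply: pw_exp_ge1 => //.
by rewrite lerD2r e2_le_am.
Qed.


Lemma leb_itv (a b : R) : a <= b ->
  (@lebesgue_measure R) `[a, b] = (b - a)%:E.
Proof.
move=> ab; rewrite lebesgue_measure_itv /= lte_fin.
rewrite le_eqVlt in ab; case/orP: ab => [/eqP ->|ab].
  by rewrite ltxx subrr.
by rewrite ab.
Qed.

Lemma g_ge0 s : 0 <= s -> 0 <= g s.
Proof.
move=> s0; apply: le_trans (g_lower s s0).
by rewrite mulr_ge0 ?(ltW K0) // le_min !powR_ge0.
Qed.

Local Open Scope ereal_scope.

Lemma Phi_upper t : (0 <= t)%R ->
  phi_delta dphi D E t <= (K * (t `^ (am + 1) + t `^ (ap + 1) + t `^ 2))%:E.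
Proof.
move=> t0.
set c := (K * (t `^ am + t `^ ap + t))%R.
apply: (@le_trans _ _ (\int[lebesgue_measure]_(s in `[0%R, t]) (cst c%:E) s)).
  apply: GL => x; rewrite !patchE; case: ifPn => // xin.
    by rewrite lee_fin g_ge0 //; move: xin; rewrite inE /= in_itv /= => /andP[].
  rewrite lee_fin.
  have [x0 xt] : (0 <= x)%R /\ (x <= t)%R.
    by move: xin; rewrite inE /= in_itv /= => /andP[].
  apply: le_trans (g_upper x x0) _.
  rewrite ler_pM2l // !lerD //; apply: pw_base_pos => //; first [exact: (ltW am0) | exact: (le_trans (ltW am0) amap)].
rewrite integral_cst //= leb_itv // subr0 -EFinM lee_fin /c -mulrA ler_pM2l //.
have ap0 : (0 < ap + 1)%R by rewrite addr_gt0 // (lt_le_trans am0).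
have am1 : (0 < am + 1)%R by rewrite addr_gt0.
rewrite !mulrDl (@pw_mul1 t am t0 am1) (@pw_mul1 t ap t0 ap0).
by rewrite (@powR_mulrn _ t 2 t0) expr2.
Qed.


Lemma Phi_lower t : (0 <= t)%R ->
  (K * (t / 2) * Num.min ((t / 2) `^ e1) ((t / 2) `^ e2))%:E <= phi_delta dphi D E t.
Proof.
move=> t0.
set h := (t / 2)%R.
have h0 : (0 <= h)%R by rewrite /h divr_ge0.
have ht : (h <= t)%R by rewrite /h ler_pdivrMr // ler_peMr // ler1n.
set c := (K * Num.min (h `^ e1) (h `^ e2))%R.
have c0 : (0 <= c)%R by rewrite mulr_ge0 ?(ltW K0) // le_min !powR_ge0.
have -> : (K * h * Num.min (h `^ e1) (h `^ e2))%R = (c * (t - h))%R.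
  by rewrite /c /h; field.
rewrite EFinM -leb_itv // -integral_cst //.
apply: GL.
  by move=> x; rewrite patchE; case: ifPn => _ //; rewrite lee_fin.
move=> x; rewrite !patchE; case: ifPn => xin.
  have [hx xt] : (h <= x)%R /\ (x <= t)%R.
    by move: xin; rewrite inE /= in_itv /= => /andP[].
  have x0 : (0 <= x)%R by apply: le_trans hx.
  rewrite mem_set /=; last by rewrite in_itv /= x0 xt.
  rewrite lee_fin; apply: le_trans (g_lower x x0).
  rewrite ler_pM2l // le_min !ge_min.
  apply/andP; split; apply/orP; [left|right]; apply: pw_base_pos => //.
  - exact: ltW (lt_le_trans ltr01 e1_ge1).
  - exact: ltW e2_gt0.
case: ifPn => // xin2.
rewrite lee_fin g_ge0 //.
by move: xin2; rewrite inE /= in_itv /= => /andP[].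
Qed.

Lemma Phi_ge0 t : (0 <= t)%R -> 0 <= phi_delta dphi D E t.
Proof.
move=> t0; apply: integral_ge0 => x; rewrite /= in_itv /= => /andP[x0 _].
by rewrite lee_fin g_ge0.
Qed.

Lemma e1E : (e1 + 1 = if (2 <= ap + 1)%R then ap + 1 else 2)%R.
Proof.
rewrite /e1; case: ifPn => h.
  by rewrite max_l // -(lerD2r 1) (_ : 1 + 1 = 2)%R.
rewrite max_r //; last first.
  by apply: ltW; rewrite -(ltrD2r 1) (_ : 1 + 1 = 2)%R // ltNge.
Qed.

Lemma e2E : (e2 + 1 = if (am + 1 <= 2)%R then am + 1 else 2)%R.
Proof.
rewrite /e2; case: ifPn => h.
  by rewrite min_l // -(lerD2r 1) (_ : 1 + 1 = 2)%R.
rewrite min_r //; last first.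
  by apply: ltW; rewrite -(ltrD2r 1) (_ : 1 + 1 = 2)%R // ltNge.
Qed.

Lemma Phi_small t : (0 <= t)%R -> (t <= 2)%R ->
  ((Num.min K 1) * (t / 2) `^ (if (2 <= ap + 1)%R then ap + 1 else 2))%:E
    <= phi_delta dphi D E t.
Proof.
move=> t0 t2; apply: le_trans (Phi_lower t t0); rewrite lee_fin -e1E.
set h := (t / 2)%R.
have h0 : (0 <= h)%R by rewrite /h divr_ge0.
have h1 : (h <= 1)%R by rewrite /h ler_pdivrMr // mul1r.
have e10 : (0 < e1)%R by apply: lt_le_trans e1_ge1.
have -> : (Num.min (h `^ e1) (h `^ e2) = h `^ e1)%R.
  apply: min_l.
  have [->|hp] := eqVneq h 0%R.
    by rewrite !powR0 ?gt_eqF ?e2_gt0.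
  apply: pw_exp_le1 => //; first by rewrite lt_def hp h0.
  exact: le_trans e2_le1 e1_ge1.
rewrite -mulrA [(h * _)%R]mulrC (@pw_mul1 h e1 h0) ?addr_gt0 //.
apply: ler_wpM2r; [exact: powR_ge0 | by rewrite ge_min lexx].
Qed.

Lemma Phi_large t : (2 < t)%R ->
  ((Num.min K 1) * (t / 2) `^ (if (am + 1 <= 2)%R then am + 1 else 2))%:E
    <= phi_delta dphi D E t.
Proof.
move=> t2; have t0 : (0 <= t)%R by apply: le_trans (ltW t2).
apply: le_trans (Phi_lower t t0); rewrite lee_fin -e2E.
set h := (t / 2)%R.
have h1 : (1 < h)%R by rewrite /h ltr_pdivlMr // mul1r.
have h0 : (0 <= h)%R by apply: le_trans (ltW h1).
have -> : (Num.min (h `^ e1) (h `^ e2) = h `^ e2)%R.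
  apply: min_r; apply: pw_exp_ge1; first exact: ltW.
  exact: le_trans e2_le1 e1_ge1.
rewrite -mulrA [(h * _)%R]mulrC (@pw_mul1 h e2 h0) ?addr_gt0 ?e2_gt0 //.
apply: ler_wpM2r; [exact: powR_ge0 | by rewrite ge_min lexx].
Qed.

End RA.

Section Meas.
Local Open Scope ereal_scope.
Context d (T : measurableType d) (R : realType).
Variables (mu : {measure set T -> \bar R}) (Omega : set T) (mO : measurable Omega).

Lemma mpow (D : set T) (u : T -> R) (p : R) : measurable_fun D u ->
  measurable_fun D (fun x => (`|u x| `^ p)%:E).
Proof.
move=> mu_; apply/measurable_EFinP.
apply: (measurableT_comp (measurable_powR p)).
exact: (measurableT_comp (@normr_measurable R setT)).
Qed.

Lemma LpO_unlock p (u : T -> R) :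
  LpO mu mO p u = (\int[mrestr mu mO]_x (`|u x| `^ p)%:E) `^ p^-1.
Proof.
by rewrite /LpO unlock /=.
Qed.

Lemma LpO_ge0 p (u : T -> R) : 0 <= LpO mu mO p u.
Proof. by rewrite LpO_unlock poweR_ge0. Qed.

Lemma LpA p (u : T -> R) : (0 < p)%R -> measurable_fun Omega u ->
  \int[mu]_(x in Omega) (`|u x| `^ p)%:E <= (LpO mu mO p u) `^ p.
Proof.
move=> p0 mu_.
rewrite LpO_unlock -poweRrM mulVf ?gt_eqF // poweRe1; last first.
  by apply: integral_ge0 => x _; rewrite lee_fin powR_ge0.
pose u' := u \_ Omega.
have mu' : measurable_fun setT u' by apply/(measurable_restrictT _ _).1.
rewrite (eq_integral (fun x => (`|u' x| `^ p)%:E)); last first.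
  by move=> x xO; rewrite /u' patchE xO.
rewrite -int_mrestr; last 2 first.
  - exact: mpow.
  - by move=> x; rewrite lee_fin powR_ge0.
apply: GL => x; rewrite !patch_setT.
  by rewrite lee_fin powR_ge0.
rewrite lee_fin /u' patchE; case: ifPn => // _.
rewrite normr0 powR0 ?gt_eqF // powR_ge0 //.
Qed.

Lemma LpB p (u : T -> R) (k : R) : (0 < p)%R -> (0 <= k)%R ->
  measurable_fun setT u ->
  \int[mu]_(x in Omega) (`|u x| `^ p)%:E <= (k `^ p)%:E ->
  LpO mu mO p u <= k%:E.
Proof.
move=> p0 k0 mu_ hI.
rewrite LpO_unlock int_mrestr; last 2 first.
  - exact: mpow.
  - by move=> x; rewrite lee_fin powR_ge0.
set I := \int[mu]_(x in Omega) _ in hI *.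
have I0 : 0 <= I by apply: integral_ge0 => x _; rewrite lee_fin powR_ge0.
have Ifin : I \is a fin_num by rewrite ge0_fin_numE // (le_lt_trans hI) ?ltey.
rewrite -(fineK Ifin) poweR_EFin lee_fin.
have hI' : (fine I <= k `^ p)%R by rewrite -lee_fin fineK.
apply: (@le_trans _ _ ((k `^ p) `^ p^-1)%R).
  apply: ge0_ler_powR; rewrite ?nnegrE ?invr_ge0 ?(ltW p0) ?fine_ge0 ?powR_ge0 //.
by rewrite -powRrM mulfV ?gt_eqF // powRr1.
Qed.


Lemma slot (Phi : R -> \bar R) (v : T -> R) (lam beta r : R) (Es : set T) :
  measurable Es -> Es `<=` Omega -> measurable_fun Omega v ->
  (0 < r)%R -> (0 < beta)%R ->
  (forall x, Omega x -> 0 <= Phi (`|v x| / lam)%R) ->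
  \int[mu]_(x in Omega) Phi (`|v x| / lam)%R <= 1 ->
  (forall x, Es x -> (`|v x| `^ r)%:E <= (beta `^ r)%:E * Phi (`|v x| / lam)%R) ->
  LpO mu mO r (v \_ Es) <= beta%:E.
Proof.
move=> mEs EsO mv r0 b0 Phi0 hint hpt.
have mu' : measurable_fun setT (v \_ Es).
  by apply/(measurable_restrictT _ _).1 => //; exact: measurable_funS mv.
apply: LpB => //; first exact: ltW.
set kk := (beta `^ r)%R.
have kk0 : (0 < kk)%R by rewrite /kk powR_gt0.
have mO' : measurable_fun Omega (fun x => (`|(v \_ Es) x| `^ r)%:E).
  by apply: mpow; exact: measurable_funS mu'.
have : (kk^-1)%:E * \int[mu]_(x in Omega) (`|(v \_ Es) x| `^ r)%:E <= 1.
  rewrite -(ge0_integralZl mu mO mO'); last 2 first.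
    - by move=> x _; rewrite lee_fin powR_ge0.
    - by rewrite lee_fin invr_ge0 ltW.
  apply: le_trans hint; apply: GL.
    move=> x; rewrite patchE; case: ifPn => // _.
    by rewrite mule_ge0 // lee_fin ?invr_ge0 ?ltW // powR_ge0.
  move=> x; rewrite [in X in X <= _]patchE [in X in _ <= X]patchE.
  case: ifPn => // xO.
  rewrite patchE; case: ifPn => xE.
    by rewrite lee_pdivrMl //; exact: hpt (set_mem xE).
  rewrite normr0 powR0 ?gt_eqF // mule0.
  by apply: Phi0; exact: set_mem xO.
by rewrite lee_pdivrMl // mule1.
Qed.


Lemma hterm (K N lam C1 p : R) : (0 < K)%R -> (0 <= N)%R -> (1 <= C1)%R -> (1 <= p)%R ->
  (C1 * N < lam)%R -> (K * (lam^-1 `^ p) * N `^ p <= K / C1)%R.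
Proof.
move=> K0 N0 C11 p1 hl.
have C10 : (0 < C1)%R by apply: lt_le_trans C11.
have lam0 : (0 < lam)%R by apply: le_lt_trans hl; rewrite mulr_ge0 // ltW.
rewrite -mulrA -powRM ?invr_ge0 ?(ltW lam0) // ler_pM2l //.
have h1 : (lam^-1 * N <= C1^-1)%R.
  by rewrite mulrC ler_pdivrMr // ler_pdivlMl // ltW.
apply: (@le_trans _ _ (C1^-1 `^ p)%R).
  apply: pw_base_pos => //; first exact: le_trans ler01 p1.
  by rewrite mulr_ge0 // invr_ge0 ltW.
apply: ge1r_powR => //; by rewrite invr_gt0 C10 /= invf_le1.
Qed.

Lemma EpowLp p (u : T -> R) (N : R) : (0 < p)%R -> measurable_fun Omega u ->
  LpO mu mO p u <= N%:E ->
  \int[mu]_(x in Omega) (`|u x| `^ p)%:E <= (N `^ p)%:E.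
Proof.
move=> p0 mu_ hN.
apply: le_trans (@LpA p u p0 mu_) _.
have A0 := LpO_ge0 p u.
have Afin : LpO mu mO p u \is a fin_num by rewrite ge0_fin_numE // (le_lt_trans hN) ?ltey.
rewrite -(fineK Afin) poweR_EFin lee_fin.
apply: pw_base_pos; [exact: ltW | exact: fine_ge0 |].
by rewrite -lee_fin fineK.
Qed.

Lemma part1 (Phi : R -> \bar R) (K C1 pm pp : R) (v : T -> R) :
  (1 <= pm)%R -> (1 <= pp)%R -> (0 < K)%R -> (1 <= C1)%R -> (3 * K <= C1)%R ->
  (forall t, (0 <= t)%R -> 0 <= Phi t) ->
  (forall t, (0 <= t)%R -> Phi t <= (K * (t `^ pm + t `^ pp + t `^ 2))%:E) ->
  measurable_fun Omega v ->
  luxemburg mu Omega Phi v <= C1%:E * cap3_norm mu mO pm pp 2 v.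
Proof.
move=> pm1 pp1 K0 C11 C1K Phi0 PhiU mv.
have C10 : (0 < C1)%R by apply: lt_le_trans C11.
have pm0 : (0 < pm)%R by apply: lt_le_trans ltr01 pm1.
have pp0 : (0 < pp)%R by apply: lt_le_trans ltr01 pp1.
rewrite /cap3_norm.
set A1 := LpO mu mO pm v; set A2 := LpO mu mO pp v; set A3 := LpO mu mO 2 v.
set N3 := Order.max A1 (Order.max A2 A3).
have A1N : A1 <= N3 by rewrite /N3 le_max lexx.
have A2N : A2 <= N3 by rewrite /N3 !le_max lexx orbT.
have A3N : A3 <= N3 by rewrite /N3 !le_max lexx !orbT.
have N30 : 0 <= N3 by apply: le_trans A1N; exact: LpO_ge0.
have [Ny|Nny] := eqVneq N3 +oo.
  by rewrite Ny mulry gtr0_sg // mul1e leey.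
have N3fin : N3 \is a fin_num by rewrite ge0_fin_numE // ltey.
rewrite -(fineK N3fin) in A1N A2N A3N *.
set N := fine N3 in A1N A2N A3N *.
have N0 : (0 <= N)%R by rewrite /N fine_ge0.
apply/lee_addgt0Pr => eps eps0.
set lam := (C1 * N + eps)%R.
have hl : (C1 * N < lam)%R by rewrite /lam ltrDl.
have lam0 : (0 < lam)%R by apply: le_lt_trans hl; rewrite mulr_ge0 // ltW.
apply: (@le_trans _ _ lam%:E); last by rewrite /lam EFinD EFinM.
apply: ereal_inf_lbound; exists lam => //; split => //.
set c1 := (K * (lam^-1 `^ pm))%R.
set c2 := (K * (lam^-1 `^ pp))%R.
set c3 := (K * (lam^-1 `^ 2))%R.
have c10 : (0 <= c1)%R by apply: mulr_ge0; [exact: ltW | exact: powR_ge0].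
have c20 : (0 <= c2)%R by apply: mulr_ge0; [exact: ltW | exact: powR_ge0].
have c30 : (0 <= c3)%R by apply: mulr_ge0; [exact: ltW | exact: powR_ge0].
have m1 := @mpow Omega v pm mv; have m2 := @mpow Omega v pp mv; have m3 := @mpow Omega v 2 mv.
have pos (p : R) (x : T) : 0 <= ((`|v x| `^ p)%R)%:E by rewrite lee_fin powR_ge0.
apply: (@le_trans _ _ (\int[mu]_(x in Omega)
   (c1%:E * (`|v x| `^ pm)%:E + c2%:E * (`|v x| `^ pp)%:E + c3%:E * (`|v x| `^ 2)%:E))).
  apply: GL.
    move=> x; rewrite patchE; case: ifPn => // _; apply: Phi0.
    by rewrite divr_ge0 // ltW.
  move=> x; rewrite !patchE; case: ifPn => // _.
  apply: le_trans (PhiU _ _) _; first by rewrite divr_ge0 // ltW.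
  rewrite -!EFinM -!EFinD lee_fin /c1 /c2 /c3 !powRM ?invr_ge0 ?(ltW lam0) //.
  by rewrite le_eqVlt; apply/orP; left; apply/eqP; ring.
rewrite ge0_integralD //; last 4 first.
  - by move=> x _; rewrite adde_ge0 // mule_ge0.
  - by apply: emeasurable_funD; apply: emeasurable_funM.
  - by move=> x _; rewrite mule_ge0.
  - exact: emeasurable_funM.
rewrite ge0_integralD //; last 4 first.
  - by move=> x _; rewrite mule_ge0.
  - exact: emeasurable_funM.
  - by move=> x _; rewrite mule_ge0.
  - exact: emeasurable_funM.
rewrite (ge0_integralZl mu mO m1) // (ge0_integralZl mu mO m2) //.
rewrite (ge0_integralZl mu mO m3) //.
have I1 := @EpowLp pm v N pm0 mv A1N.
have I2 := @EpowLp pp v N pp0 mv A2N.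
have I3 := @EpowLp 2%R v N (ltr0Sn _ 1) mv A3N.
apply: (@le_trans _ _ ((c1 * N `^ pm)%:E + (c2 * N `^ pp)%:E + (c3 * N `^ 2)%:E)).
  by rewrite !EFinM !leeD // lee_wpmul2l // lee_fin.
rewrite -!EFinD lee_fin.
have h1 := @hterm K N lam C1 pm K0 N0 C11 pm1 hl.
have h2 := @hterm K N lam C1 pp K0 N0 C11 pp1 hl.
have h3 := @hterm K N lam C1 2%R K0 N0 C11 (ler1n _ 2) hl.
rewrite /c1 /c2 /c3.
apply: (@le_trans _ _ (3 * (K / C1))%R).
  lra.
by rewrite mulrA ler_pdivrMr // mul1r.
Qed.

Lemma hslot (a lam c r : R) : (0 <= a)%R -> (0 < lam)%R -> (0 < c)%R -> (c <= 1)%R ->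
  (1 <= r)%R ->
  (a `^ r <= (2 * lam / c) `^ r * (c * ((a / lam) / 2) `^ r))%R.
Proof.
move=> a0 lam0 c0 c1 r1.
have ci0 : (0 <= c^-1)%R by rewrite invr_ge0 ltW.
rewrite mulrCA -powRM; last 2 first.
  - by rewrite divr_ge0 ?mulr_ge0 // ltW.
  - by rewrite !divr_ge0 // ltW.
have -> : (2 * lam / c * (a / lam / 2) = a * c^-1)%R.
  by field; rewrite !gt_eqF.
rewrite powRM //.
have h : (1 <= c * c^-1 `^ r)%R.
  apply: (@le_trans _ _ (c * c^-1)%R); first by rewrite mulfV ?gt_eqF.
  by rewrite ler_pM2l // le1r_powR // invf_ge1.
rewrite mulrCA -[X in (X <= _)%R]mulr1 ler_wpM2l ?powR_ge0 //.
Qed.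

Lemma part2 (Phi : R -> \bar R) (c pm pp : R) (v : T -> R) :
  (1 <= pm)%R -> (1 <= pp)%R -> (0 < c)%R -> (c <= 1)%R ->
  (forall t, (0 <= t)%R -> 0 <= Phi t) ->
  (forall t, (0 <= t)%R -> (t <= 2)%R ->
     (c * (t / 2) `^ (if (2 <= pp)%R then pp else 2))%:E <= Phi t) ->
  (forall t, (2 < t)%R ->
     (c * (t / 2) `^ (if (pm <= 2)%R then pm else 2))%:E <= Phi t) ->
  measurable_fun Omega v ->
  sum3_norm mu mO pm pp 2 v <= (6 / c)%:E * luxemburg mu Omega Phi v.
Proof.
move=> pm1 pp1 c0 c1 Phi0 HS HL mv.
have pm0 : (0 < pm)%R by apply: lt_le_trans ltr01 pm1.
have pp0 : (0 < pp)%R by apply: lt_le_trans ltr01 pp1.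
have c60 : (0 < 6 / c)%R by rewrite divr_gt0.
set L := luxemburg mu Omega Phi v.
have L0 : 0 <= L.
  by apply: le_ereal_inf_tmp => _ [lam [lam0 _] <-]; rewrite lee_fin ltW.
have [Ly|Lny] := eqVneq L +oo.
  by rewrite Ly mulry gtr0_sg // mul1e leey.
have Lfin : L \is a fin_num by rewrite ge0_fin_numE // ltey.
apply/lee_addgt0Pr => eps eps0.
have e0 : (0 < eps * c / 6)%R by rewrite !divr_gt0 // mulr_gt0.
have [_ [lam [lam0 hint] <-] hlam] := lb_ereal_inf_adherent e0 Lfin.
have {}hlam : lam%:E < L + (eps * c / 6)%:E by exact: hlam.
apply: (@le_trans _ _ ((6 / c * lam)%R%:E)); last first.
  rewrite EFinM; apply: le_trans (lee_wpmul2l _ (ltW hlam)) _.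
    by rewrite lee_fin ltW.
  rewrite -(fineK Lfin) -EFinD -!EFinM -EFinD lee_fin.
  rewrite le_eqVlt; apply/orP; left; apply/eqP.
  by field; rewrite !gt_eqF.
set beta := (2 * lam / c)%R.
have beta0 : (0 < beta)%R by rewrite /beta !divr_gt0 // mulr_gt0.
set S := Omega `&` v @^-1` [set` `[- (2 * lam), 2 * lam]%R].
have mS : measurable S by apply: mv => //; exact: measurable_itv.
have hS x : S x <-> Omega x /\ (`|v x| <= 2 * lam)%R.
  by rewrite /S /= in_itv /= -ler_norml.
set E1 := if (2 <= pp)%R then S else set0.
set E2 := if (pm <= 2)%R then Omega `\` S else set0.
set E3 := (if (2 <= pp)%R then set0 else S) `|` (if (pm <= 2)%R then set0 else Omega `\` S).
have mE1 : measurable E1 by rewrite /E1; case: ifP.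
have mE2 : measurable E2 by rewrite /E2; case: ifP => // _; exact: measurableD.
have mE3 : measurable E3.
  by rewrite /E3; apply: measurableU; case: ifP => // _; exact: measurableD.
have E1O : E1 `<=` Omega by rewrite /E1; case: ifP => // _ x [].
have E2O : E2 `<=` Omega by rewrite /E2; case: ifP => // _ x [].
have E3O : E3 `<=` Omega.
  by rewrite /E3 => x; case: ifP => _; case: ifP => _ //= [[]|[]].
have mvE (E : set T) : measurable E -> E `<=` Omega -> measurable_fun setT (v \_ E).
  by move=> mE EO; apply/(measurable_restrictT _ _).1 => //; exact: measurable_funS mv.
have Phi0' : forall x, Omega x -> 0 <= Phi (`|v x| / lam)%R.
  by move=> x _; apply: Phi0; rewrite divr_ge0 // ltW.
have key (x : T) (r : R) : (1 <= r)%R ->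
    (c * ((`|v x| / lam) / 2) `^ r)%:E <= Phi (`|v x| / lam)%R ->
    (`|v x| `^ r)%:E <= (beta `^ r)%:E * Phi (`|v x| / lam)%R.
  move=> r1 h.
  have hb : 0 <= (beta `^ r)%:E by rewrite lee_fin powR_ge0.
  apply: le_trans (lee_wpmul2l hb h).
  by rewrite -EFinM lee_fin /beta hslot // ltW.
have tle x : S x -> (`|v x| / lam <= 2)%R.
  by move=> /hS[_ h]; rewrite ler_pdivrMr.
have tgt x : ~ S x -> Omega x -> (2 < `|v x| / lam)%R.
  move=> nS Ox; rewrite ltr_pdivlMr //; rewrite ltNge; apply/negP => h.
  by apply: nS; apply/hS.
have t0 x : (0 <= `|v x| / lam)%R by rewrite divr_ge0 // ltW.
have L1 : LpO mu mO pp (v \_ E1) <= beta%:E.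
  apply: (@slot Phi v lam beta pp E1 mE1 E1O mv pp0 beta0 Phi0' hint) => x.
  rewrite /E1; case: ifPn => // b1 Sx; apply: key => //.
  by have := HS _ (t0 x) (tle x Sx); rewrite b1.
have L2 : LpO mu mO pm (v \_ E2) <= beta%:E.
  apply: (@slot Phi v lam beta pm E2 mE2 E2O mv pm0 beta0 Phi0' hint) => x.
  rewrite /E2; case: ifPn => // b2 [Ox nSx]; apply: key => //.
  by have := HL _ (tgt x nSx Ox); rewrite b2.
have L3 : LpO mu mO 2 (v \_ E3) <= beta%:E.
  apply: (@slot Phi v lam beta 2%R E3 mE3 E3O mv (ltr0Sn _ 1) beta0 Phi0' hint) => x.
  rewrite /E3 => -[|].
    case: ifPn => // b1 Sx; apply: key => //; first exact: ler1n.
    by have := HS _ (t0 x) (tle x Sx); rewrite (negbTE b1).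
  case: ifPn => // b2 [Ox nSx]; apply: key => //; first exact: ler1n.
  by have := HL _ (tgt x nSx Ox); rewrite (negbTE b2).
apply: (@le_trans _ _ (LpO mu mO pm (v \_ E2) + LpO mu mO pp (v \_ E1)
                       + LpO mu mO 2 (v \_ E3))).
  apply: ereal_inf_lbound; exists (v \_ E2), (v \_ E1), (v \_ E3); split => //.
  - exact: measurable_funS (mvE _ mE2 E2O).
  - exact: measurable_funS (mvE _ mE1 E1O).
  - exact: measurable_funS (mvE _ mE3 E3O).
  - move=> x Ox; rewrite !patchE.
    have pt : (point : R) = 0%R by [].
    have [Sx|nSx] := pselect (S x).
      have m1 : x \in S by apply/mem_set.
      have m2 : (x \in Omega `\` S) = false.
        by apply/negbTE/negP => /set_mem [].
      rewrite /E1 /E2 /E3; case: (2 <= pp)%R; case: (pm <= 2)%R;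
        rewrite ?in_setU ?m1 ?m2 ?in_set0 /= pt; ring.
    have m1 : (x \in S) = false by apply/negbTE/negP => /set_mem.
    have m2 : x \in Omega `\` S by apply/mem_set.
    rewrite /E1 /E2 /E3; case: (2 <= pp)%R; case: (pm <= 2)%R;
      rewrite ?in_setU ?m1 ?m2 ?in_set0 /= pt; ring.
apply: le_trans (leeD (leeD L2 L1) L3) _.
rewrite -!EFinD lee_fin /beta.
rewrite le_eqVlt; apply/orP; left; apply/eqP.
by field; rewrite !gt_eqF.
Qed.

End Meas.

Local Open Scope ring_scope.

Theorem lemmaA7 (R : realType) (d : measure_display) (T : measurableType d)
    (mu : {measure set T -> \bar R}) (Omega : set T) (mO : measurable Omega)
    (phi dphi : R -> R) :
  Nfunction phi dphi -> uniformly_convex dphi ->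
  exists C : R, 0 < C /\
    forall dm dp : R, 0 < dm -> dm <= 1 -> 1 <= dp ->
    forall v : T -> R, measurable_fun Omega v ->
      (luxemburg mu Omega (phi_delta dphi dm dp) v
         <= C%:E * cap3_norm mu mO (p_minus dphi) (p_plus dphi) 2 v)%E /\
      (sum3_norm mu mO (p_minus dphi) (p_plus dphi) 2 v
         <= C%:E * luxemburg mu Omega (phi_delta dphi dm dp) v)%E.
Proof.
move=> [Hrc Hmono Hd0 [Hpos Hinf] Hint] [Hcont Hder Hcd pm1 Hub_set].
set Sr := [set index_ratio dphi t | t in `]0, +oo[].
have in_ratio t : 0 < t -> Sr (index_ratio dphi t).
  by move=> t0; exists t => //; rewrite /= in_itv /= andbT.
have Hub t : 0 < t -> index_ratio dphi t <= p_plus dphi - 1.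
  by move=> t0; rewrite /p_plus addrK; exact: (ub_le_sup Hub_set (in_ratio t t0)).
have lb : has_lbound Sr.
  case: (pselect (has_lbound Sr)) => // nlb; exfalso.
  have : inf Sr = 0 by apply: inf_out => -[_].
  by move: pm1; rewrite /p_minus -/Sr => + h; rewrite h add0r ltxx.
have Hlb t : 0 < t -> p_minus dphi - 1 <= index_ratio dphi t.
  by move=> t0; rewrite /p_minus addrK; exact: (ge_inf lb (in_ratio t t0)).
set am := p_minus dphi - 1.
set ap := p_plus dphi - 1.
have am0 : 0 < am by rewrite /am subr_gt0.
have amap : am <= ap by apply: le_trans (Hlb 1 ltr01) (Hub 1 ltr01).
have K0 : 0 < dphi 1 by apply: Hpos.
have pmE : p_minus dphi = am + 1 by rewrite /am subrK.
have ppE : p_plus dphi = ap + 1 by rewrite /ap subrK.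
have pm1' : 1 <= p_minus dphi by exact: ltW.
have pp1' : 1 <= p_plus dphi.
  by rewrite ppE; apply: le_trans pm1' _; rewrite pmE lerD2r.
set K := dphi 1.
set C1 := Num.max 1 (3 * K).
set c := Num.min K 1.
have c0 : 0 < c by rewrite /c lt_min K0 ltr01.
have c1 : c <= 1 by rewrite /c ge_min lexx orbT.
set C := Num.max C1 (6 / c).
have C1C : C1 <= C by rewrite /C le_max lexx.
have C2C : 6 / c <= C by rewrite /C le_max lexx orbT.
have C11 : 1 <= C1 by rewrite /C1 le_max lexx.
have C1K : 3 * K <= C1 by rewrite /C1 le_max lexx orbT.
exists C; split; first by apply: lt_le_trans C1C; apply: lt_le_trans C11.
move=> dm dp dm0 dm1 dp1 v mv; split.
- apply: le_trans (@part1 d T R mu Omega mO (phi_delta dphi dm dp) K C1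
                    (p_minus dphi) (p_plus dphi) v pm1' pp1' K0 C11 C1K _ _ mv) _.
  + by move=> t t0; exact: (@Phi_ge0 R dphi Hpos Hder am ap Hlb Hub am0 K0 dm dp dm0 dm1 dp1 t t0).
  + move=> t t0; rewrite pmE ppE.
    exact: (@Phi_upper R dphi Hpos Hder am ap Hlb Hub am0 amap K0 dm dp dm0 dm1 dp1 t t0).
  + apply: lee_wpmul2r; last by rewrite lee_fin.
    by rewrite /cap3_norm !le_max LpO_ge0.
- apply: le_trans (@part2 d T R mu Omega mO (phi_delta dphi dm dp) c
                    (p_minus dphi) (p_plus dphi) v pm1' pp1' c0 c1 _ _ _ mv) _.
  + by move=> t t0; exact: (@Phi_ge0 R dphi Hpos Hder am ap Hlb Hub am0 K0 dm dp dm0 dm1 dp1 t t0).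
  + move=> t t0 t2; rewrite ppE.
    exact: (@Phi_small R dphi Hpos Hder am ap Hlb Hub am0 K0 dm dp dm0 dm1 dp1 t t0 t2).
  + move=> t t2; rewrite pmE.
    exact: (@Phi_large R dphi Hpos Hder am ap Hlb Hub am0 K0 dm dp dm0 dm1 dp1 t t2).
  + apply: lee_wpmul2r; last by rewrite lee_fin.
    by apply: le_ereal_inf_tmp => _ [lam [lam0 _] <-]; rewrite lee_fin ltW.
Qed.
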